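(* Let $\bar x \in \mathrm{dom}\,\psi$, let $H > 0$, let $F'(\bar x) \in \partial F(\bar x)$ be a chosen subgradient with $F'(\bar x) \neq 0$, and let $A = A_H(\bar x) = \frac{1}{\sigma}\sqrt{\frac{H}{3}\|F'(\bar x)\|_*}$. Then $$H\, \|T_A(\bar x) - \bar x\| \;\leq\; 3\sigma A.$$
   Context: $\mathbb{E}$ is a finite-dimensional real vector space with an arbitrary norm $\|\cdot\|$; $\mathbb{E}^*$ is its dual with dual norm $\|g\|_* = \max\{\langle g, x\rangle : \|x\|\le 1\}$. $F = f + \psi$, where $\psi$ is a closed convex function with $\mathrm{dom}\,\psi \subseteq \mathbb{E}$ and $f$ is convex and twice continuously differentiable; subgradients of $F$ have the form $F'(\bar x) = \nabla f(\bar x) + \psi'(\bar x)$ with $\psi'(\bar x) \in \partial \psi(\bar x)$. The scaling function $d$ is differentiable and satisfies, for some $\sigma\in(0,1]$ and all $x,y \in \mathrm{dom}\,\psi$: $d(y) \ge d(x) + \langle \nabla d(x), y-x\rangle + \frac{\sigma}{2}\|y-x\|^2$ and $\|\nabla d(x) - \nabla d(y)\|_* \le \|x-y\|$. Bregman distance: $\rho(x,y) = d(y) - d(x) - \langle \nabla d(x), y-x\rangle$. For $A>0$, $$T_A(\bar x) = \arg\min_{y\in\mathrm{dom}\,\psi}\Big[ f(\bar x) + \langle \nabla f(\bar x), y-\bar x\rangle + \tfrac12 \langle \nabla^2 f(\bar x)(y-\bar x), y-\bar x\rangle + A\rho(\bar x,y) + \psi(y)\Big].$$ *)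

(* Defs.v *)
(* E = 'rV[R]_n (finite-dimensional real vector
   space, R : realType), the dual identified with 'rV[R]_n via the pairing dotp. *)
From HB Require Import structures.
From mathcomp Require Import all_boot all_order all_algebra.
From mathcomp Require Import all_classical all_reals all_analysis.
Set Implicit Arguments. Unset Strict Implicit. Unset Printing Implicit Defensive.
Import Order.TTheory GRing.Theory Num.Theory.
Import numFieldNormedType.Exports.
Local Open Scope classical_set_scope.
Local Open Scope ring_scope.

Definition dotp {R : realType} {n : nat} (g x : 'rV[R]_n) : R :=
  \sum_(i < n) g 0 i * x 0 i.

Definition is_norm {R : realType} {n : nat} (N : 'rV[R]_n -> R) : Prop :=
  [/\ forall x, N x = 0 -> x = 0,
      forall (a : R) x, N (a *: x) = `|a| * N x &
      forall x y, N (x + y) <= N x + N y].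

Definition dual_norm {R : realType} {n : nat} (N : 'rV[R]_n -> R)
  (g : 'rV[R]_n) : R :=
  sup [set dotp g x | x in [set x | N x <= 1]].

(* gradient (as an element of the dual space) and Hessian (matrix, (H h)_i = sum_j H i j h j) *)
Definition grad {R : realType} {n : nat} (f : 'rV[R]_n -> R) (x : 'rV[R]_n)
  : 'rV[R]_n := \row_j (('d f x : 'rV[R]_n -> R) (delta_mx 0 j)).

Definition hess {R : realType} {n : nat} (f : 'rV[R]_n -> R) (x : 'rV[R]_n)
  : 'M[R]_n := \matrix_(i, j) (('d (grad f) x : 'rV[R]_n -> 'rV[R]_n) (delta_mx 0 j)) 0 i.

Definition mx_apply {R : realType} {n : nat} (M : 'M[R]_n) (h : 'rV[R]_n)
  : 'rV[R]_n := h *m M^T.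

Definition convex_fun {R : realType} {n : nat} (f : 'rV[R]_n -> R) : Prop :=
  forall x y (t : R), 0 <= t <= 1 ->
    f (t *: x + (1 - t) *: y) <= t * f x + (1 - t) * f y.

Definition econvex_fun {R : realType} {n : nat} (psi : 'rV[R]_n -> \bar R)
  : Prop :=
  forall (x y : 'rV[R]_n) (t : R), 0 <= t <= 1 ->
    (psi (t *: x + (1 - t) *: y)%R <= t%:E * psi x + (1 - t)%:E * psi y)%E.

Definition edom {R : realType} {n : nat} (psi : 'rV[R]_n -> \bar R)
  : set 'rV[R]_n := [set x | (psi x < +oo)%E].

Definition closed_proper_convex {R : realType} {n : nat}
  (psi : 'rV[R]_n -> \bar R) : Prop :=
  [/\ econvex_fun psi, forall x, psi x != -oo%E, edom psi !=set0 &
      lower_semicontinuous psi].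

Definition subgrad {R : realType} {n : nat} (psi : 'rV[R]_n -> \bar R)
  (x s : 'rV[R]_n) : Prop :=
  forall y, (psi x + (dotp s (y - x)%R)%:E <= psi y)%E.

Definition bregman {R : realType} {n : nat} (d : 'rV[R]_n -> R)
  (x y : 'rV[R]_n) : R :=
  d y - d x - dotp (grad d x) (y - x).

Definition model {R : realType} {n : nat} (f : 'rV[R]_n -> R)
  (psi : 'rV[R]_n -> \bar R) (d : 'rV[R]_n -> R) (A : R) (xb y : 'rV[R]_n)
  : \bar R :=
  ((f xb + dotp (grad f xb) (y - xb)
    + 2^-1 * dotp (mx_apply (hess f xb) (y - xb)) (y - xb)
    + A * bregman d xb y)%:E + psi y)%E.

Definition is_TA {R : realType} {n : nat} (f : 'rV[R]_n -> R)
  (psi : 'rV[R]_n -> \bar R) (d : 'rV[R]_n -> R) (A : R) (xb T : 'rV[R]_n)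
  : Prop :=
  edom psi T /\ forall y, edom psi y -> (model f psi d A xb T <= model f psi d A xb y)%E.

(* Main.v *)
Require Import Defs.
From HB Require Import structures.
From mathcomp Require Import all_boot all_order all_algebra.
From mathcomp Require Import all_classical all_reals all_analysis.
From mathcomp Require Import lra ring.
Import Order.TTheory GRing.Theory Num.Theory.
Import numFieldNormedType.Exports.
Local Open Scope classical_set_scope.
Local Open Scope ring_scope.


Section S.
Variables (R : realType) (n : nat).
Implicit Types (g h x y : 'rV[R]_n).

Lemma dotpDr g x y : dotp g (x + y) = dotp g x + dotp g y.
Proof. by rewrite /dotp -big_split; apply: eq_bigr => i _; rewrite mxE mulrDr. Qed.
Lemma dotpZr g a x : dotp g (a *: x) = a * dotp g x.
Proof. by rewrite /dotp mulr_sumr; apply: eq_bigr => i _; rewrite mxE mulrCA. Qed.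
Lemma dotpNr g x : dotp g (- x) = - dotp g x.
Proof. by rewrite -scaleN1r dotpZr mulN1r. Qed.
Lemma dotpBr g x y : dotp g (x - y) = dotp g x - dotp g y.
Proof. by rewrite dotpDr dotpNr. Qed.
Lemma dotpC g x : dotp g x = dotp x g.
Proof. by apply: eq_bigr => i _; rewrite mulrC. Qed.
Lemma dotpDl g h x : dotp (g + h) x = dotp g x + dotp h x.
Proof. by rewrite dotpC dotpDr -!(dotpC x). Qed.
Lemma dotpNl g x : dotp (- g) x = - dotp g x.
Proof. by rewrite dotpC dotpNr dotpC. Qed.
Lemma dotpBl g h x : dotp (g - h) x = dotp g x - dotp h x.
Proof. by rewrite dotpDl dotpNl. Qed.
Lemma dotpZl a g x : dotp (a *: g) x = a * dotp g x.
Proof. by rewrite dotpC dotpZr dotpC. Qed.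
Lemma dotp0r g : dotp g 0 = 0.
Proof. by rewrite -(scale0r 0) dotpZr mul0r. Qed.

Lemma dotpp_gt0 g : g != 0 -> 0 < dotp g g.
Proof.
move=> g0; have [i gi] : exists i, g 0 i != 0.
  apply/existsP; apply: contraR g0 => /existsPn H; apply/eqP/rowP => i.
  by rewrite mxE; have := H i; rewrite negbK => /eqP.
rewrite /dotp (bigD1 i) //= ltr_pwDl //.
  by rewrite -expr2 lt_def sqrf_eq0 gi sqr_ge0.
by apply: sumr_ge0 => j _; rewrite -expr2; exact: sqr_ge0.
Qed.

Lemma lin_rowE (m : nat) (L : {linear 'rV[R]_n -> 'rV[R]_m}) x :
  L x = \sum_(j < n) x 0 j *: L (delta_mx 0 j).
Proof. by rewrite {1}(row_sum_delta x) linear_sum; apply: eq_bigr => j _; rewrite linearZ. Qed.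

Lemma lin_scalE (L : {linear 'rV[R]_n -> R^o}) x :
  L x = \sum_(j < n) x 0 j * L (delta_mx 0 j).
Proof. by rewrite {1}(row_sum_delta x) linear_sum; apply: eq_bigr => j _; rewrite linearZ. Qed.

Lemma dotp_grad (f : 'rV[R]_n -> R) x w : dotp (grad f x) w = 'd f x w.
Proof.
rewrite (lin_scalE ('d f x)) /dotp; apply: eq_bigr => j _.
by rewrite mxE mulrC.
Qed.

Lemma hess_apply (f : 'rV[R]_n -> R) x w :
  mx_apply (hess f x) w = 'd (grad f) x w.
Proof.
rewrite (@lin_rowE _ ('d (grad f) x)); apply/rowP => i.
rewrite !mxE summxE; apply: eq_bigr => j _.
by rewrite !mxE.
Qed.

Lemma mx_applyZ (M : 'M[R]_n) a w : mx_apply M (a *: w) = a *: mx_apply M w.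
Proof. by rewrite /mx_apply scalemxAl. Qed.

Lemma dotp_cont w : continuous (fun u : 'rV[R]_n => dotp u w).
Proof.
move=> u; apply: differentiable_continuous.
have -> : (fun u : 'rV[R]_n => dotp u w) = \sum_(i < n) (fun u : 'rV[R]_n => u 0 i * w 0 i).
  by rewrite fct_sumE; apply/funext => v.
apply: differentiable_sum => i; apply: differentiableM => //.
exact: differentiable_coord.
Qed.
End S.

Section N.
Variables (R : realType) (n : nat) (N : 'rV[R]_n -> R) (hN : is_norm N).

Lemma N0 : N 0 = 0.
Proof. case: hN => _ hZ _; by rewrite -(scale0r 0) hZ normr0 mul0r. Qed.
Lemma Nzero x : N x = 0 -> x = 0.
Proof. by case: hN => h _ _; exact: h. Qed.
Lemma NN x : N (- x) = N x.
Proof. case: hN => _ hZ _; by rewrite -scaleN1r hZ normrN1 mul1r. Qed.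
Lemma Nge0 x : 0 <= N x.
Proof.
case: hN => _ _ hT; have := hT x (- x); rewrite subrr N0 NN => H.
lra.
Qed.
Lemma NZ a x : N (a *: x) = `|a| * N x.
Proof. by case: hN => _ hZ _. Qed.
Lemma Nsum (F : 'I_n -> 'rV[R]_n) : N (\sum_j F j) <= \sum_j N (F j).
Proof.
case: hN => _ _ hT.
elim/big_rec2: _ => [|j a b _ IH]; first by rewrite N0.
by apply: le_trans (hT _ _) _; rewrite lerD2l.
Qed.

Lemma coord_le (x : 'rV[R]_n) i : `|x 0 i| <= `|x|.
Proof. rewrite [leRHS]/Num.norm /= mx_normrE; apply/bigmax_geP; right => /=; by exists (0, i). Qed.

Definition CN := \sum_(j < n) N (delta_mx 0 j).

Lemma Nup x : N x <= CN * `|x|.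
Proof.
rewrite {1}(row_sum_delta x); apply: le_trans (Nsum _) _.
rewrite /CN mulr_suml; apply: ler_sum => j _; rewrite NZ mulrC.
by apply: ler_wpM2l; [exact: Nge0 | exact: coord_le].
Qed.

Lemma N_cont : continuous N.
Proof.
case: hN => _ _ hT.
move=> x; apply/(@cvgrPdist_lt _ _ _ (nbhs x) (nbhs_filter x)) => e e0.
have C0 : 0 < CN + 1 by rewrite ltr_wpDl // /CN sumr_ge0 // => j _; exact: Nge0.
have : \forall y \near x, `|x - y| < e / (CN + 1).
  have := proj1 (@cvgrPdist_lt _ _ _ (nbhs x) (nbhs_filter x) id x) (@cvg_id _ (nbhs x)).
  by apply; rewrite divr_gt0.
apply: filterS => y hy.
have h1 : N x - N y <= N (x - y).
  by have := hT (x - y) y; rewrite subrK; lra.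
have h2 : N y - N x <= N (x - y).
  by have := hT (y - x) x; rewrite subrK -opprB NN; lra.
have h3 : N (x - y) <= CN * `|x - y| := Nup _.
have h4 : CN * `|x - y| <= CN * (e / (CN + 1)).
  by apply: ler_wpM2l; [rewrite /CN sumr_ge0 // => j _; exact: Nge0| exact: ltW].
have h5 : CN * (e / (CN + 1)) < e.
  by rewrite mulrA ltr_pdivrMr // mulrDr mulr1 mulrC ltrDl.
rewrite ltr_norml; apply/andP; split; lra.
Qed.

Lemma Nlow (g : 'rV[R]_n) (g0 : g != 0) :
  exists2 m, 0 < m & forall x, m * `|x| <= N x.
Proof.
set S := [set x : 'rV[R]_n | `|x| = 1].
have S0 : S !=set0 by exists (`|g|^-1 *: g); rewrite /S /= normfZV.
have cS : compact S.
  apply: bounded_closed_compact.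
    exists 1; split; first exact: num_real.
    by move=> M M1 x /= ->; exact: ltW.
  have := @preimage_closed _ R (fun x : 'rV[R]_n => `|x|) [set 1].
  apply; [move=> y _; exact: norm_continuous | exact: closed_eq].
have [c /set_mem cS' hc] := EVT_min_rV S0 cS (continuous_subspaceT (N_cont)).
have c0 : c != 0 by apply/eqP => c0; move: cS'; rewrite /S /= c0 normr0; lra.
have Nc : 0 < N c.
  rewrite lt_def Nge0 andbT; apply/eqP => /Nzero /eqP; exact/negP.
exists (N c) => // x.
have [->|x0] := eqVneq x 0; first by rewrite normr0 mulr0 N0.
have -> : N x = `|x| * N (`|x|^-1 *: x).
  by rewrite NZ normfV normr_id mulrA mulfV ?mul1r // normr_eq0.
rewrite mulrC ler_wpM2l //; apply: hc; rewrite inE /S /=; exact: normfZV.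
Qed.

Lemma dual_has_sup g : g != 0 -> has_sup [set dotp g x | x in [set x | N x <= 1]].
Proof.
move=> g0; split; first by exists (dotp g 0), 0 => //=; rewrite N0.
have [m m0 hm] := @Nlow g g0.
exists ((\sum_i `|g 0 i|) / m) => _ [x /= Nx <-].
have h1 : dotp g x <= (\sum_i `|g 0 i|) * `|x|.
  rewrite /dotp mulr_suml; apply: ler_sum => i _.
  apply: le_trans (ler_norm _) _; rewrite normrM; apply: ler_wpM2l => //.
  exact: coord_le.
apply: le_trans h1 _; rewrite ler_pdivlMr //.
have hs : 0 <= \sum_i `|g 0 i| by apply: sumr_ge0.
have hx : m * `|x| <= 1 by apply: le_trans (hm x) _.
have nx : 0 <= `|x| by [].
move: hs hx nx m0; set s := \sum_i _; set q := `|x|; nra.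
Qed.

Lemma dual_le g x : g != 0 -> dotp g x <= dual_norm N g * N x.
Proof.
move=> g0; have hs := @dual_has_sup g g0.
have [->|x0] := eqVneq x 0.
  by rewrite /dotp big1 ?N0 ?mulr0 // => i _; rewrite mxE mulr0.
have Nx : 0 < N x by rewrite lt_def Nge0 andbT; apply/eqP => /Nzero /eqP; exact/negP.
have : dotp g ((N x)^-1 *: x) <= dual_norm N g.
  apply: sup_upper_bound => //; exists ((N x)^-1 *: x) => //=.
  by rewrite NZ ger0_norm ?invr_ge0 ?Nge0 // mulVf // gt_eqF.
by rewrite dotpZr mulrC ler_pdivrMr.
Qed.

Lemma dual_gt0 g : g != 0 -> 0 < dual_norm N g.
Proof.
move=> g0; have hs := @dual_has_sup g g0.
have Ng : 0 < N g by rewrite lt_def Nge0 andbT; apply/eqP => /Nzero /eqP; exact/negP.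
have : dotp g ((N g)^-1 *: g) <= dual_norm N g.
  apply: sup_upper_bound => //; exists ((N g)^-1 *: g) => //=.
  by rewrite NZ ger0_norm ?invr_ge0 ?Nge0 // mulVf // gt_eqF.
rewrite dotpZr; apply: lt_le_trans.
by rewrite mulr_gt0 ?invr_gt0 // dotpp_gt0.
Qed.
End N.
Arguments N0 {R n N}. Arguments NN {R n N}. Arguments Nge0 {R n N}. Arguments NZ {R n N}.
Arguments Nzero {R n N}. Arguments dual_le {R n N}. Arguments dual_gt0 {R n N}.


Section C.
Variables (R : realType) (n : nat) (f : 'rV[R]_n -> R) (hc : convex_fun f).

Lemma conv_first x y : differentiable f x -> 'd f x (y - x) <= f y - f x.
Proof.
move=> df; rewrite -deriveE //.
have cv := @diff_derivable _ _ _ f x (y - x) df.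
set F := (fun h : R => h^-1 *: ((f \o shift x) (h *: (y - x)) - f x)).
have H : F @ 0^'+ --> 'D_(y - x) f x.
  move=> A /cv /nbhs_ballP [e e0 xe_A].
  by exists e => //= z xe_z; rewrite lt_def => /andP [xnez _]; apply: xe_A.
apply: (cvgr_to_le H); near=> h.
have h0 : 0 < h by near: h; exact: nbhs_right_gt.
have h1 : h < 1 by near: h; exact: nbhs_right_lt.
rewrite /F /= ler_pdivrMl //.
have -> : h *: (y - x) + x = h *: y + (1 - h) *: x.
  by rewrite scalerBr scalerBl scale1r -addrA [- _ + x]addrC.
have hh : f (h *: y + (1 - h) *: x) <= h * f y + (1 - h) * f x.
  by apply: hc; rewrite !ltW.
have hm : h * f y + (1 - h) * f x - f x = h * (f y - f x) by ring.
lra.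
Unshelve. all: by end_near.
Qed.

Hypothesis hd1 : forall x, differentiable f x.

Lemma conv_first_dotp x y : dotp (grad f x) (y - x) <= f y - f x.
Proof. rewrite dotp_grad; exact: conv_first. Qed.

Lemma grad_mono x y : 0 <= dotp (grad f y - grad f x) (y - x).
Proof.
have h1 := conv_first_dotp x y.
have h2 := conv_first_dotp y x.
rewrite -[x - y]opprB dotpNr lerNl opprB in h2.
rewrite dotpBl subr_ge0; exact: le_trans h1 h2.
Qed.

Lemma hess_psd x w : differentiable (grad f) x -> 0 <= dotp ('d (grad f) x w) w.
Proof.
move=> d2; rewrite -deriveE //.
have cv := @diff_derivable _ _ _ (grad f) x w d2.
have H := @continuous_cvg _ _ _ _ (dnbhs_filter 0) _ (fun u => dotp u w) _ (@dotp_cont R n w _) cv.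
apply: (cvgr_to_ge H); near=> h.
have h0 : h != 0 by near: h; exact: nbhs_dnbhs_neq.
rewrite /= dotpZl.
have := grad_mono x (h *: w + x); rewrite addrK dotpZr.
case: (ltgtP h 0) => hs; last by move: h0; rewrite hs eqxx.
  by rewrite !nmulr_rge0 ?invr_lt0.
by rewrite !pmulr_rge0 ?invr_gt0.
Unshelve. all: by end_near.
Qed.
End C.
Arguments hess_psd {R n f}.


Section K.
Variable R : realType.

Lemma key_real (t A sg r fx gw sw Q dT dz dx D0w Dzw a b c : R) :
 0 < t < 1 -> 0 < sg -> 0 <= A -> 0 <= Q -> 0 <= r ->
 fx + gw + 2^-1 * Q + A * (dT - dx - D0w) + b <=
   fx + (1 - t) * gw + 2^-1 * ((1 - t) * ((1 - t) * Q)) + A * (dz - dx - (1 - t) * D0w) + c ->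
 c <= t * a + (1 - t) * b ->
 a + sw <= b ->
 dz + t * Dzw + sg / 2 * (t * r) ^+ 2 <= dT ->
 dz + - ((1 - t) * Dzw) + sg / 2 * ((1 - t) * r) ^+ 2 <= dx ->
 dx + (1 - t) * D0w + sg / 2 * ((1 - t) * r) ^+ 2 <= dz ->
 A * sg * r ^+ 2 * (1 - t / 2) <= - (gw + sw).
Proof.
move=> /andP[t0 t1] sg0 A0 Q0 r0 hTA hc hsub sc1 sc2 sc3.
have E0 : 0 <= (1 - t) * (Dzw - D0w - sg * (1 - t) * r ^+ 2).
  rewrite !expr2 in sc2 sc3 *; lra.
have E1 : 0 <= Dzw - D0w - sg * (1 - t) * r ^+ 2.
  by move: E0; rewrite pmulr_rge0 // subr_gt0.
have P1 : A * (dz + t * Dzw + sg / 2 * (t * r) ^+ 2) <= A * dT by rewrite ler_wpM2l.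
have P2 : 0 <= A * t * (Dzw - D0w - sg * (1 - t) * r ^+ 2).
  by rewrite !mulr_ge0 // ltW.
have P3 : t * (a + sw) <= t * b by rewrite ler_wpM2l // ltW.
have P4 : 0 <= t * (2 - t) * Q by rewrite !mulr_ge0 // ?subr_ge0 ltW //; lra.
have G : 0 <= t * (- (gw + sw) - A * sg * r ^+ 2 * (1 - t / 2)).
  rewrite !expr2 in sc1 P1 P2 *; lra.
by move: G; rewrite pmulr_rge0 // subr_ge0.
Qed.

Lemma lim_arg (P K : R) : 0 <= K -> (forall t, 0 < t < 1 -> P * (1 - t / 2) <= K) -> P <= K.
Proof.
move=> K0 H; rewrite leNgt; apply/negP => hPK.
have P0 : 0 < P by apply: le_lt_trans hPK.
have t0 : 0 < (P - K) / (2 * P) by rewrite divr_gt0 ?subr_gt0 // mulr_gt0.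
have t1 : (P - K) / (2 * P) < 1 by rewrite ltr_pdivrMr ?mulr_gt0 //; lra.
have := H ((P - K) / (2 * P)); rewrite t0 t1 => /(_ isT).
have -> : P * (1 - (P - K) / (2 * P) / 2) = P - (P - K) / 4.
  by field; rewrite gt_eqF.
lra.
Qed.

Lemma final_arith (H sg A dn r : R) : 0 < H -> 0 < sg -> 0 < dn ->
  A = sg^-1 * Num.sqrt (H / 3 * dn) -> 0 <= r -> A * sg * r ^+ 2 <= dn * r ->
  H * r <= 3 * sg * A.
Proof.
move=> H0 sg0 dn0 hA r0 hP.
set S := Num.sqrt (H / 3 * dn).
have S0 : 0 < S by rewrite sqrtr_gt0 mulr_gt0 // divr_gt0.
have SA : sg * A = S by rewrite hA mulrA mulfV ?gt_eqF // mul1r.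
have S2 : S ^+ 2 = H / 3 * dn by rewrite sqr_sqrtr // ltW // mulr_gt0 // divr_gt0.
have -> : 3 * sg * A = 3 * S by rewrite -SA mulrA.
have hP' : S * r ^+ 2 <= dn * r by rewrite -SA [sg * A]mulrC.
have [->|rpos] := eqVneq r 0; first by rewrite mulr0 mulr_ge0 // ltW.
have rp : 0 < r by rewrite lt_def rpos r0.
have h1 : S * r <= dn by move: hP'; rewrite expr2 mulrA ler_pM2r.
have h2 : dn = 3 * S ^+ 2 / H by rewrite S2; field; rewrite gt_eqF.
have h3 : H * (S * r) <= H * dn by rewrite ler_pM2l.
have h4 : H * dn = 3 * S ^+ 2 by rewrite h2; field; rewrite gt_eqF.
have h5 : S * (H * r) <= S * (3 * S) by move: h3; rewrite h4 expr2 => h; lra.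
by move: h5; rewrite ler_pM2l.
Qed.
End K.
Arguments key_real {R}. Arguments lim_arg {R}. Arguments final_arith {R}.


Theorem corollary1 (R : realType) (n : nat) (N : 'rV[R]_n -> R)
  (f : 'rV[R]_n -> R) (psi : 'rV[R]_n -> \bar R) (d : 'rV[R]_n -> R)
  (sigma : R)
  (hN : is_norm N)
  (hpsi : closed_proper_convex psi)
  (hf_conv : convex_fun f)
  (hf_d1 : forall x, differentiable f x)
  (hf_d2 : forall x, differentiable (grad f) x)
  (hf_c2 : continuous (hess f))
  (hsigma : 0 < sigma <= 1)
  (hd_diff : forall x, edom psi x -> differentiable d x)
  (hd_sc : forall x y, edom psi x -> edom psi y ->
     d x + dotp (grad d x) (y - x) + sigma / 2 * N (y - x) ^+ 2 <= d y)
  (hd_lip : forall x y, edom psi x -> edom psi y ->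
     dual_norm N (grad d x - grad d y) <= N (x - y))
  (xb : 'rV[R]_n) (hxb : edom psi xb)
  (H : R) (hH : 0 < H)
  (s : 'rV[R]_n) (hs : subgrad psi xb s)
  (hF : grad f xb + s != 0)
  (A : R) (hA : A = sigma^-1 * Num.sqrt (H / 3 * dual_norm N (grad f xb + s)))
  (T : 'rV[R]_n) (hT : is_TA f psi d A xb T) :
  H * N (T - xb) <= 3 * sigma * A.
Proof.
have /andP[sg0 _] := hsigma.
have dn0 := dual_gt0 hN _ hF.
have A0 : 0 <= A by rewrite hA mulr_ge0 ?invr_ge0 ?sqrtr_ge0 // ltW.
case: hT => hTd hTmin.
case: hpsi => hconv hninf _ _.
have fin : forall x, edom psi x -> psi x = (fine (psi x))%:E.
  move=> x hx; rewrite fineK // fin_numE hninf /= lt_eqF //.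
have r0 : 0 <= N (T - xb) by exact: Nge0.
apply: (final_arith H sigma A _ (N (T - xb)) hH sg0 dn0 hA r0).
apply: lim_arg; first by rewrite mulr_ge0 // ltW.
move=> t /andP[t0 t1].
set w := T - xb.
set z := xb + (1 - t) *: w.
have ez : z = t *: xb + (1 - t) *: T.
  by apply/rowP => i; rewrite /z /w !mxE; ring.
have zxb : z - xb = (1 - t) *: w by apply/rowP => i; rewrite /z !mxE; ring.
have Tz : T - z = t *: w by apply/rowP => i; rewrite /z /w !mxE; ring.
have xbz : xb - z = - ((1 - t) *: w) by apply/rowP => i; rewrite /z !mxE; ring.
have ht01 : 0 <= t <= 1 by rewrite !ltW.
have hcv := hconv xb T t ht01.
rewrite -ez (fin xb hxb) (fin T hTd) -!EFinM -EFinD in hcv.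
have zd : edom psi z by apply: le_lt_trans hcv _; exact: ltry.
rewrite (fin z zd) lee_fin in hcv.
have hsub := hs T; rewrite (fin xb hxb) (fin T hTd) -EFinD lee_fin -/w in hsub.
have hmin := hTmin z zd.
rewrite /model (fin z zd) (fin T hTd) -!EFinD lee_fin zxb -/w /bregman zxb -/w in hmin.
rewrite !mx_applyZ !dotpZl !dotpZr in hmin.
have tn : `|t| = t by rewrite ger0_norm // ltW.
have t1n : `|1 - t| = 1 - t by rewrite ger0_norm // subr_ge0 ltW.
have sc1 := hd_sc z T zd hTd; rewrite Tz dotpZr (NZ hN) tn in sc1.
have sc2 := hd_sc z xb zd hxb; rewrite xbz dotpNr (NN hN) dotpZr (NZ hN) t1n in sc2.
have sc3 := hd_sc xb z hxb zd; rewrite zxb dotpZr (NZ hN) t1n in sc3.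
have Q0 : 0 <= dotp (mx_apply (hess f xb) w) w by rewrite hess_apply; exact: hess_psd.
have K := key_real _ _ _ _ _ _ _ _ _ _ _ _ _ _ _ _ (introT andP (conj t0 t1)) sg0 A0 Q0 r0 hmin hcv hsub sc1 sc2 sc3.
apply: le_trans K _.
have := dual_le hN _ (- w) hF.
by rewrite dotpNr dotpDl (NN hN).
Qed.
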